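(* There exists an $S(3,K_4^{(3)}+e,v)$ for each $v\in\{10,12,15\}$.
   Context: $K_4^{(3)}+e$ denotes the 3-uniform hypergraph with vertex set $\{1,2,3,4,5\}$ and edge set $\{\{1,2,3\},\{1,2,4\},\{1,3,4\},\{2,3,4\},\{3,4,5\}\}$. An $S(3,K_4^{(3)}+e,v)$ is a collection of 3-uniform hypergraphs (blocks) on subsets of a $v$-set $X$, each isomorphic to $K_4^{(3)}+e$, whose edge sets partition the set of all 3-subsets of $X$. *)

(* Defs.v *)
From mathcomp Require Import all_boot.
Set Implicit Arguments. Unset Strict Implicit. Unset Printing Implicit Defensive.

(* Vertices of K_4^(3)+e: 1..5 are encoded as 0..4 in 'I_5. *)
Definition v5 (k : nat) : 'I_5 := inord k.

Definition K4e_edges : {set {set 'I_5}} :=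
  [set [set v5 0; v5 1; v5 2]; [set v5 0; v5 1; v5 3]; [set v5 0; v5 2; v5 3];
       [set v5 1; v5 2; v5 3]; [set v5 2; v5 3; v5 4]].

(* A block on the point set X = 'I_v is given by an injective labelling
   f : 'I_5 -> 'I_v of the vertices of K_4^(3)+e; the block is the image
   hypergraph, isomorphic to K_4^(3)+e via f. *)
Definition block_edges (v : nat) (f : {ffun 'I_5 -> 'I_v}) : {set {set 'I_v}} :=
  [set [set f x | x in e] | e : {set 'I_5} in K4e_edges].

Definition is_S3_K4e (v : nat) (B : seq {ffun 'I_5 -> 'I_v}) : Prop :=
  (forall f, f \in B -> injective f) /\
  (forall T : {set 'I_v}, #|T| = 3 ->
     count (fun f => T \in block_edges f) B = 1).

(* Main.v *)
Require Import Defs.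
From mathcomp Require Import all_boot.

Definition eq3 (u t : seq nat) : bool := all (fun a => a \in t) u && all (fun a => a \in u) t.
Definition edges3 (s : seq nat) : seq (seq nat) :=
  let a := nth 0 s in
  [:: [:: a 0; a 1; a 2]; [:: a 0; a 1; a 3]; [:: a 0; a 2; a 3];
      [:: a 1; a 2; a 3]; [:: a 2; a 3; a 4]].
Definition mkf (n : nat) (s : seq nat) : {ffun 'I_5 -> 'I_n.+1} :=
  [ffun i : 'I_5 => inord (nth 0 s (nat_of_ord i))].
Definition good n (s : seq nat) := [&& size s == 5, uniq s & all (fun a => a < n.+1) s].
Definition check n (L : seq (seq nat)) :=
  all (good n) L &&
  all (fun X => all (fun Y => all (fun Z => [|| X == Y, Y == Z, X == Z |
     count (fun s => has (eq3 [:: X; Y; Z]) (edges3 s)) L == 1])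
     (iota 0 n.+1)) (iota 0 n.+1)) (iota 0 n.+1).

Lemma seteq3 (T : finType) (x y z p q r : T) :
  ([set x; y; z] == [set p; q; r]) =
  all (fun a => a \in [:: p; q; r]) [:: x; y; z] && all (fun a => a \in [:: x; y; z]) [:: p; q; r].
Proof.
rewrite eqEsubset; congr andb.
  apply/subsetP/allP => H a Ha; by have := H a; move: Ha; rewrite /= !inE !orbA; auto.
apply/subsetP/allP => H a Ha; by have := H a; move: Ha; rewrite /= !inE !orbA; auto.
Qed.

Lemma seteq3_ord n (x y z : 'I_n.+1) a b c : a < n.+1 -> b < n.+1 -> c < n.+1 ->
  ([set x; y; z] == [set inord a; inord b; inord c]) = eq3 [:: val x; val y; val z] [:: a; b; c].
Proof.
move=> Ha Hb Hc; rewrite seteq3 /eq3 /= !inE -!val_eqE /= !inordK //.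
Qed.

Lemma card3 (T : finType) (A : {set T}) : #|A| = 3 ->
  exists x y z, [/\ x != y, y != z, x != z & A = [set x; y; z]].
Proof.
rewrite cardE => Hs; have := enum_uniq A.
case E: (enum A) Hs => [|x [|y [|z [|w l]]]] //= _.
rewrite !inE negb_or => /and3P[/andP[nxy nxz] nyz _].
exists x, y, z; split => //; apply/setP => u; rewrite -mem_enum E !inE /= orbA //.
Qed.

Lemma fv5 n s k : k < 5 -> mkf n s (v5 k) = inord (nth 0 s k).
Proof. by move=> Hk; rewrite /mkf ffunE /v5 inordK. Qed.

Lemma key n s (x y z : 'I_n.+1) : good n s ->
  ([set x; y; z] \in block_edges (mkf n s)) =
  has (eq3 [:: val x; val y; val z]) (edges3 s).
Proof.
case/and3P => /eqP Hsz _ /allP Hall.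
have Hn k : k < 5 -> nth 0 s k < n.+1 by move=> Hk; apply: Hall; rewrite mem_nth // Hsz.
rewrite /block_edges /K4e_edges !(imsetU, imsetU1, imset_set1) !in_setU !in_set1.
rewrite !fv5 //.
by rewrite !seteq3_ord ?Hn //= !orbA orbF.
Qed.

Lemma check_ok n L : check n L -> is_S3_K4e (map (mkf n) L).
Proof.
case/andP => /allP Hg /allP Hc; split.
  move=> f /mapP[s Hs ->] i j.
  have /and3P[/eqP Hsz Hu /allP Hall] := Hg s Hs.
  rewrite !ffunE => /(congr1 (@nat_of_ord _)); rewrite !inordK ?Hall ?mem_nth ?Hsz //.
  by move/eqP; rewrite nth_uniq ?Hsz // => /eqP/val_inj.
move=> T /card3[x [y [z [nxy nyz nxz ->]]]].
rewrite count_map.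
rewrite (eq_in_count (a2 := has (eq3 [:: val x; val y; val z]) \o edges3)); last first.
  by move=> s Hs /=; rewrite key // Hg.
have := Hc (val x); rewrite mem_iota ltn_ord => /(_ isT) /allP /(_ (val y)).
rewrite mem_iota ltn_ord => /(_ isT) /allP /(_ (val z)).
rewrite mem_iota ltn_ord => /(_ isT).
by rewrite !val_eqE (negbTE nxy) (negbTE nyz) (negbTE nxz) /= => /eqP.
Qed.

Definition L10 : seq (seq nat) := [:: [:: 0; 1; 2; 5; 4]; [:: 6; 7; 2; 3; 5]; [:: 5; 6; 2; 9; 4]; [:: 0; 3; 5; 7; 2]; [:: 4; 9; 5; 8; 2]; [:: 2; 7; 0; 9; 5]; [:: 7; 9; 1; 5; 8]; [:: 1; 6; 3; 5; 9]; [:: 1; 7; 3; 4; 5]; [:: 2; 8; 1; 4; 5]; [:: 0; 6; 1; 7; 2]; [:: 8; 9; 1; 6; 2]; [:: 5; 6; 7; 8; 1]; [:: 6; 9; 4; 7; 5]; [:: 0; 8; 4; 7; 2]; [:: 3; 9; 7; 8; 2]; [:: 0; 6; 2; 8; 9]; [:: 4; 6; 3; 8; 5]; [:: 1; 3; 0; 8; 5]; [:: 0; 4; 2; 3; 8]; [:: 0; 5; 4; 6; 2]; [:: 0; 9; 1; 4; 6]; [:: 3; 6; 0; 9; 8]; [:: 1; 2; 3; 9; 4]].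
Definition L12 : seq (seq nat) := [:: [:: 0; 11; 4; 10; 7]; [:: 1; 11; 5; 0; 8]; [:: 2; 11; 6; 1; 9]; [:: 3; 11; 7; 2; 10]; [:: 4; 11; 8; 3; 0]; [:: 5; 11; 9; 4; 1]; [:: 6; 11; 10; 5; 2]; [:: 7; 11; 0; 6; 3]; [:: 8; 11; 1; 7; 4]; [:: 9; 11; 2; 8; 5]; [:: 10; 11; 3; 9; 6]; [:: 0; 2; 1; 9; 11]; [:: 1; 3; 2; 10; 11]; [:: 2; 4; 3; 0; 11]; [:: 3; 5; 4; 1; 11]; [:: 4; 6; 5; 2; 11]; [:: 5; 7; 6; 3; 11]; [:: 6; 8; 7; 4; 11]; [:: 7; 9; 8; 5; 11]; [:: 8; 10; 9; 6; 11]; [:: 9; 0; 10; 7; 11]; [:: 10; 1; 0; 8; 11]; [:: 0; 1; 4; 6; 11]; [:: 1; 2; 5; 7; 11]; [:: 2; 3; 6; 8; 11]; [:: 3; 4; 7; 9; 11]; [:: 4; 5; 8; 10; 11]; [:: 5; 6; 9; 0; 11]; [:: 6; 7; 10; 1; 11]; [:: 7; 8; 0; 2; 11]; [:: 8; 9; 1; 3; 11]; [:: 9; 10; 2; 4; 11]; [:: 10; 0; 3; 5; 11]; [:: 0; 3; 1; 7; 9]; [:: 1; 4; 2; 8; 10]; [:: 2; 5; 3; 9; 0]; [:: 3; 6; 4; 10; 1]; [:: 4; 7; 5; 0; 2]; [:: 5; 8; 6; 1; 3]; [:: 6; 9; 7; 2; 4]; [:: 7; 10; 8; 3; 5]; [::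 8; 0; 9; 4; 6]; [:: 9; 1; 10; 5; 7]; [:: 10; 2; 0; 6; 8]].
Definition L15 : seq (seq nat) := [:: [:: 0; 3; 7; 13; 14]; [:: 1; 4; 8; 13; 14]; [:: 2; 5; 9; 13; 14]; [:: 3; 6; 10; 13; 14]; [:: 4; 7; 11; 13; 14]; [:: 5; 8; 12; 13; 14]; [:: 6; 9; 0; 13; 14]; [:: 7; 10; 1; 13; 14]; [:: 8; 11; 2; 13; 14]; [:: 9; 12; 3; 13; 14]; [:: 10; 0; 4; 13; 14]; [:: 11; 1; 5; 13; 14]; [:: 12; 2; 6; 13; 14]; [:: 0; 2; 3; 4; 13]; [:: 1; 3; 4; 5; 13]; [:: 2; 4; 5; 6; 13]; [:: 3; 5; 6; 7; 13]; [:: 4; 6; 7; 8; 13]; [:: 5; 7; 8; 9; 13]; [:: 6; 8; 9; 10; 13]; [:: 7; 9; 10; 11; 13]; [:: 8; 10; 11; 12; 13]; [:: 9; 11; 12; 0; 13]; [:: 10; 12; 0; 1; 13]; [:: 11; 0; 1; 2; 13]; [:: 12; 1; 2; 3; 13]; [:: 0; 3; 8; 10; 13]; [:: 1; 4; 9; 11; 13]; [:: 2; 5; 10; 12; 13]; [:: 3; 6; 11; 0; 13]; [:: 4; 7; 12; 1; 13]; [:: 5; 8; 0; 2; 13]; [:: 6; 9; 1; 3; 13]; [:: 7; 10; 2; 4; 13]; [:: 8; 11; 3; 5; 13]; [:: 9; 12; 4; 6; 13]; [:: 10; 0; 5; 7; 13]; [:: 11; 1; 6; 8; 13]; [:: 12;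 2; 7; 9; 13]; [:: 0; 5; 1; 6; 13]; [:: 1; 6; 2; 7; 13]; [:: 2; 7; 3; 8; 13]; [:: 3; 8; 4; 9; 13]; [:: 4; 9; 5; 10; 13]; [:: 5; 10; 6; 11; 13]; [:: 6; 11; 7; 12; 13]; [:: 7; 12; 8; 0; 13]; [:: 8; 0; 9; 1; 13]; [:: 9; 1; 10; 2; 13]; [:: 10; 2; 11; 3; 13]; [:: 11; 3; 12; 4; 13]; [:: 12; 4; 0; 5; 13]; [:: 0; 14; 9; 10; 3]; [:: 1; 14; 10; 11; 4]; [:: 2; 14; 11; 12; 5]; [:: 3; 14; 12; 0; 6]; [:: 4; 14; 0; 1; 7]; [:: 5; 14; 1; 2; 8]; [:: 6; 14; 2; 3; 9]; [:: 7; 14; 3; 4; 10]; [:: 8; 14; 4; 5; 11]; [:: 9; 14; 5; 6; 12]; [:: 10; 14; 6; 7; 0]; [:: 11; 14; 7; 8; 1]; [:: 12; 14; 8; 9; 2]; [:: 0; 14; 6; 8; 5]; [:: 1; 14; 7; 9; 6]; [:: 2; 14; 8; 10; 7]; [:: 3; 14; 9; 11; 8]; [:: 4; 14; 10; 12; 9]; [:: 5; 14; 11; 0; 10]; [:: 6; 14; 12; 1; 11]; [:: 7; 14; 0; 2; 12]; [:: 8; 14; 1; 3; 0]; [:: 9; 14; 2; 4; 1]; [:: 10; 14; 3; 5; 2]; [:: 11; 14; 4; 6; 3]; [:: 12; 14; 5; 7; 4]; [:: 0; 2; 6; 10; 12]; [:: 1; 3; 7; 11; 0]; [:: 2; 4;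 8; 12; 1]; [:: 3; 5; 9; 0; 2]; [:: 4; 6; 10; 1; 3]; [:: 5; 7; 11; 2; 4]; [:: 6; 8; 12; 3; 5]; [:: 7; 9; 0; 4; 6]; [:: 8; 10; 1; 5; 7]; [:: 9; 11; 2; 6; 8]; [:: 10; 12; 3; 7; 9]; [:: 11; 0; 4; 8; 10]; [:: 12; 1; 5; 9; 11]].

Lemma c10 : check 9 L10. Proof. vm_compute. reflexivity. Qed.
Lemma c12 : check 11 L12. Proof. vm_compute. reflexivity. Qed.
Lemma c15 : check 14 L15. Proof. vm_compute. reflexivity. Qed.

Theorem lemma3p2 :
  forall v : nat, v \in [:: 10; 12; 15] ->
    exists B : seq {ffun 'I_5 -> 'I_v}, is_S3_K4e B.
Proof.
move=> v; rewrite !inE => /or3P[] /eqP ->.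
- by exists (map (mkf 9) L10); apply: check_ok; exact: c10.
- by exists (map (mkf 11) L12); apply: check_ok; exact: c12.
- by exists (map (mkf 14) L15); apply: check_ok; exact: c15.
Qed.
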